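(* Let $\mathfrak{n}=\mathfrak{v}\oplus\mathfrak{z}$ be a fat (non-singular) 2-step nilpotent real Lie algebra with center $\mathfrak{z}$, and let $G(\mathfrak{n})$ be its group of graded automorphisms $\begin{pmatrix} a&0\\0&b\end{pmatrix}$, $a\in SL(\mathfrak{v})$, $b\in GL(\mathfrak{z})$, $b([u,v])=[au,av]$ for all $u,v\in\mathfrak{v}$. Then there is a positive definite inner product on $\mathfrak{z}$ that is invariant under (the action on $\mathfrak{z}$ of) $G(\mathfrak{n})$, i.e. every $b$ occurring in an element of $G(\mathfrak{n})$ is orthogonal for it.
   Context: A 2-step nilpotent real Lie algebra $\mathfrak{n}$ with center $\mathfrak{z}$ is written $\mathfrak{n}=\mathfrak{v}\oplus\mathfrak{z}$ with $\mathfrak{v}\cong\mathfrak{n}/\mathfrak{z}$; its structure is encoded by an antisymmetric bilinear map $[\ ,\ ]:\mathfrak{v}\times\mathfrak{v}\to\mathfrak{z}$. It is called fat (non-singular) if for every nonzero $\lambda\in\mathfrak{z}^*$ the 2-form $(u,v)\mapsto\lambda([u,v])$ on $\mathfrak{v}$ is non-degenerate (equivalently, $\operatorname{ad}x:\mathfrak{n}\to\mathfrak{z}$ is onto for every $x\notin\mathfrak{z}$). *)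

(* Defs.v *)
From HB Require Import structures.
From mathcomp Require Import all_boot all_order all_algebra.
From mathcomp Require Import reals.
Set Implicit Arguments. Unset Strict Implicit. Unset Printing Implicit Defensive.
Import Order.TTheory GRing.Theory Num.Theory.
Local Open Scope ring_scope.

(* A 2-step nilpotent Lie algebra n = v (+) z with v = R^n, z = R^m
   (row vectors), given by its bracket br : v x v -> z. *)

Definition bilinear_antisym (R : realType) (n m : nat)
  (br : 'rV[R]_n -> 'rV[R]_n -> 'rV[R]_m) : Prop :=
  (forall (c : R) (u u' v : 'rV[R]_n), br (c *: u + u') v = c *: br u v + br u' v)
  /\ (forall u v : 'rV[R]_n, br u v = - br v u).

Definition nonabelian (R : realType) (n m : nat)
  (br : 'rV[R]_n -> 'rV[R]_n -> 'rV[R]_m) : Prop :=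
  exists u v, br u v != 0.

Definition center_is_z (R : realType) (n m : nat)
  (br : 'rV[R]_n -> 'rV[R]_n -> 'rV[R]_m) : Prop :=
  forall u, (forall v, br u v = 0) -> u = 0.

Definition fat (R : realType) (n m : nat)
  (br : 'rV[R]_n -> 'rV[R]_n -> 'rV[R]_m) : Prop :=
  forall lam : 'cV[R]_m, lam != 0 ->
    forall u, (forall v, (br u v *m lam) 0 0 = 0) -> u = 0.

(* (a, b) in G(n): a in SL(v), b in GL(z), b [u,v] = [a u, a v]
   (maps act on row vectors on the right: x |-> x *m a) *)
Definition graded_aut (R : realType) (n m : nat)
  (br : 'rV[R]_n -> 'rV[R]_n -> 'rV[R]_m) (a : 'M[R]_n) (b : 'M[R]_m) : Prop :=
  \det a = 1 /\ b \in unitmx /\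
  forall u v, br u v *m b = br (u *m a) (v *m a).

(* S is the Gram matrix of a positive definite inner product on z:
   <x, y> = x S y^T *)
Definition pos_def_inner (R : realType) (m : nat) (S : 'M[R]_m) : Prop :=
  S^T = S /\ forall x : 'rV[R]_m, x != 0 -> 0 < (x *m S *m x^T) 0 0.

(* Main.v *)
Require Import Defs.
From HB Require Import structures.
From mathcomp Require Import all_boot all_order all_algebra.
From mathcomp Require Import reals.
From mathcomp Require Import all_classical all_reals all_analysis.
From mathcomp Require Import perm lra ring.
Import Order.TTheory GRing.Theory Num.Theory.
Import numFieldTopology.Exports numFieldNormedType.Exports.
Set Implicit Arguments. Unset Strict Implicit. Unset Printing Implicit Defensive.
Local Open Scope ring_scope.

Lemma cont_sum (R : realType) (T : topologicalType) (I : Type) (r : seq I) (P : pred I)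
  (F : I -> T -> R) :
  (forall i, continuous (F i)) -> continuous (fun x => \sum_(i <- r | P i) F i x).
Proof.
move=> HF; elim: r => [|i r IH].
  have -> : (fun x => \sum_(j <- [::] | P j) F j x) = (fun=> 0) :> (T -> R).
    by apply/funext => x; rewrite big_nil.
  exact: cst_continuous.
have -> : (fun x => \sum_(j <- i :: r | P j) F j x) =
  (fun x => (if P i then F i x else 0) + \sum_(j <- r | P j) F j x).
  by apply/funext => x; rewrite big_cons; case: (P i); rewrite ?add0r.
move=> x; apply: continuousD; last exact: IH.
case: (P i); [exact: HF | exact: cst_continuous].
Qed.

Lemma cont_prod (R : realType) (T : topologicalType) (I : Type) (r : seq I) (P : pred I)
  (F : I -> T -> R) :
  (forall i, continuous (F i)) -> continuous (fun x => \prod_(i <- r | P i) F i x).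
Proof.
move=> HF; elim: r => [|i r IH].
  have -> : (fun x => \prod_(j <- [::] | P j) F j x) = (fun=> 1) :> (T -> R).
    by apply/funext => x; rewrite big_nil.
  exact: cst_continuous.
have -> : (fun x => \prod_(j <- i :: r | P j) F j x) =
  (fun x => (if P i then F i x else 1) * \prod_(j <- r | P j) F j x).
  by apply/funext => x; rewrite big_cons; case: (P i); rewrite ?mul1r.
move=> x; apply: continuousM; last exact: IH.
case: (P i); [exact: HF | exact: cst_continuous].
Qed.

Lemma cont_mul (R : realType) (T : topologicalType) (f g : T -> R) :
  continuous f -> continuous g -> continuous (fun x => f x * g x).
Proof. by move=> cf cg x; exact: (continuousM (cf x) (cg x)). Qed.

Lemma cont_add (R : realType) (T : topologicalType) (f g : T -> R) :
  continuous f -> continuous g -> continuous (fun x => f x + g x).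
Proof. by move=> cf cg x; exact: (continuousD (cf x) (cg x)). Qed.

Lemma cont_mxAB (R : realType) m n p q (A : 'M[R]_(m, n)) (B : 'M[R]_(p, q)) i j :
  continuous (fun X : 'M[R]_(n, p) => (A *m X *m B) i j).
Proof.
have -> : (fun X : 'M[R]_(n, p) => (A *m X *m B) i j) =
  (fun X => \sum_l (\sum_k A i k * X k l) * B l j).
  by apply/funext => X; rewrite mxE; apply: eq_bigr => l _; rewrite mxE.
apply: cont_sum => l; apply: cont_mul; last exact: cst_continuous.
apply: cont_sum => k; apply: cont_mul; first exact: cst_continuous.
exact: coord_continuous.
Qed.



Lemma lin_sumP (R : realType) n (f : 'rV[R]_n -> R) :
  (forall c x x', f (c *: x + x') = c * f x + f x') ->
  forall (I : Type) (r : seq I) (P : pred I) (c : I -> R) (x : I -> 'rV[R]_n),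
  f (\sum_(i <- r | P i) c i *: x i) = \sum_(i <- r | P i) c i * f (x i).
Proof.
move=> Hf I r P c x.
have f0 : f 0 = 0.
  have := Hf 1 0 0; rewrite scaler0 addr0 mul1r => H.
  by apply: (@addrI _ (f 0)); rewrite addr0 -H.
elim: r => [|i r IH]; first by rewrite !big_nil.
rewrite !big_cons; case: (P i) => //.
by rewrite Hf IH.
Qed.

Definition Mx (R : realType) n m (br : 'rV[R]_n -> 'rV[R]_n -> 'rV[R]_m)
  (w : 'rV[R]_m) : 'M[R]_n :=
  \matrix_(i, j) (br (delta_mx 0 i) (delta_mx 0 j) *m w^T) 0 0.

Lemma quad_entry (R : realType) n (u v : 'rV[R]_n) (X : 'M[R]_n) :
  (u *m X *m v^T) 0 0 = \sum_i \sum_j u 0 i * v 0 j * X i j.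
Proof.
rewrite mxE; under eq_bigr do rewrite !mxE big_distrl /=.
rewrite exchange_big /=; apply: eq_bigr => i _; apply: eq_bigr => j _.
by rewrite mulrAC.
Qed.

Lemma bil_expand (R : realType) n m (br : 'rV[R]_n -> 'rV[R]_n -> 'rV[R]_m) :
  bilinear_antisym br -> forall u v w,
  (br u v *m w^T) 0 0 = (u *m Mx br w *m v^T) 0 0.
Proof.
move=> [Hl Ha] u v w.
pose beta x y := (br x y *m w^T) 0 0.
have Hl1 : forall y c x x', beta (c *: x + x') y = c * beta x y + beta x' y.
  by move=> y c x x'; rewrite /beta Hl mulmxDl -scalemxAl !mxE.
have Hl2 : forall x c y y', beta x (c *: y + y') = c * beta x y + beta x y'.
  have Hs : forall x y, beta x y = - beta y x.
    by move=> x y; rewrite /beta Ha mulNmx mxE.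
  move=> x c y y'; rewrite Hs Hl1 (Hs x y) (Hs x y').
  by rewrite opprD mulrN.
rewrite quad_entry -/(beta u v).
rewrite {1}(row_sum_delta u) (lin_sumP (Hl1 v)).
apply: eq_bigr => i _.
rewrite {1}(row_sum_delta v) (lin_sumP (Hl2 _)).
rewrite big_distrr /=; apply: eq_bigr => j _.
by rewrite mulrA /beta !mxE.
Qed.

Definition Hgrp (R : realType) n m (br : 'rV[R]_n -> 'rV[R]_n -> 'rV[R]_m)
  (b : 'M[R]_m) := exists a, graded_aut br a b.

Lemma Mx_act (R : realType) n m (br : 'rV[R]_n -> 'rV[R]_n -> 'rV[R]_m) a b w :
  bilinear_antisym br -> graded_aut br a b ->
  Mx br (w *m b^T) = a *m Mx br w *m a^T.
Proof.
move=> hB [_ [_ Hab]]; apply/matrixP => i j.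
rewrite [LHS]mxE trmx_mul trmxK mulmxA Hab bil_expand //.
rewrite !quad_entry mxE exchange_big /=; apply: eq_bigr => k _.
rewrite [in RHS]mxE big_distrl /=; apply: eq_bigr => l _.
by rewrite -!rowE !mxE mulrAC.
Qed.

Lemma Pd_act (R : realType) n m (br : 'rV[R]_n -> 'rV[R]_n -> 'rV[R]_m) a b w :
  bilinear_antisym br -> graded_aut br a b ->
  \det (Mx br (w *m b^T)) = \det (Mx br w).
Proof.
move=> hB hab; rewrite (Mx_act _ hB hab).
case: hab => da _.
by rewrite !det_mulmx det_tr da mul1r mulr1.
Qed.

Lemma Pd_neq0 (R : realType) n m (br : 'rV[R]_n -> 'rV[R]_n -> 'rV[R]_m) w :
  bilinear_antisym br -> fat br -> w != 0 -> \det (Mx br w) != 0.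
Proof.
move=> hB hF w0; apply/negP => /det0P [u u0 Hu].
have wT0 : w^T != 0 by rewrite trmx_eq0.
move/negP: u0; apply; apply/eqP; apply: (hF _ wT0) => v.
by rewrite bil_expand // Hu mul0mx mxE.
Qed.

Lemma Pd_hom (R : realType) n m (br : 'rV[R]_n -> 'rV[R]_n -> 'rV[R]_m) t w :
  \det (Mx br (t *: w)) = t ^+ n * \det (Mx br w).
Proof.
rewrite -detZ; congr (\det _); apply/matrixP => i j.
by rewrite !mxE linearZ /= big_distrr; apply: eq_bigr => k _; rewrite !mxE mulrCA.
Qed.


Lemma dims_pos (R : realType) n m (br : 'rV[R]_n -> 'rV[R]_n -> 'rV[R]_m) :
  bilinear_antisym br -> nonabelian br -> (0 < n)%N /\ (0 < m)%N.
Proof.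
move=> [Hl _] [u [v Huv]]; split.
  case: n br u v Huv Hl => // br u v Huv Hl.
  have u0 : u = 0 by apply/matrixP => i [].
  have := Hl 1 0 0 v; rewrite scaler0 addr0 scale1r => H.
  have : br 0 v = 0 by apply: (@addrI _ (br 0 v)); rewrite addr0 -H.
  by move=> E; rewrite u0 E eqxx in Huv.
case: m br Huv Hl => // br Huv _.
have E : br u v = 0 by apply/matrixP => i [].
by rewrite E eqxx in Huv.
Qed.

Lemma cont_Pd (R : realType) n m (br : 'rV[R]_n -> 'rV[R]_n -> 'rV[R]_m) :
  continuous (fun w : 'rV[R]_m => \det (Mx br w)).
Proof.
have -> : (fun w : 'rV[R]_m => \det (Mx br w)) = (fun w =>
   \sum_(s : 'S_n) (-1) ^+ s * \prod_i
      \sum_k br (delta_mx 0 i) (delta_mx 0 (s i)) 0 k * w 0 k).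
  apply/funext => w; apply: eq_bigr => s _; congr (_ * _).
  by apply: eq_bigr => i _; rewrite !mxE; apply: eq_bigr => k _; rewrite mxE.
apply: cont_sum => s; apply: cont_mul; first exact: cst_continuous.
apply: cont_prod => i; apply: cont_sum => k; apply: cont_mul.
  exact: cst_continuous.
exact: coord_continuous.
Qed.

Lemma bounded_H (R : realType) n m (br : 'rV[R]_n -> 'rV[R]_n -> 'rV[R]_m) :
  bilinear_antisym br -> nonabelian br -> fat br ->
  exists K : R, 1 <= K /\ forall a b, graded_aut br a b -> forall w : 'rV[R]_m,
   `|w *m b^T| <= K * `|w| /\ `|w| <= K * `|w *m b^T|.
Proof.
move=> hB hN hF.
have [n0 m0] := dims_pos hB hN.
pose Q (w : 'rV[R]_m) := \det (Mx br w) * \det (Mx br w).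
have cQ : continuous Q.
  rewrite /Q; apply: cont_mul; exact: cont_Pd.
pose A := [set w : 'rV[R]_m | `|w| = 1]%classic.
have cA : compact A.
  apply: bounded_closed_compact.
    rewrite /= /bounded_near; near=> M => x /= ->; near: M.
    by apply: nbhs_pinfty_ge; rewrite num_real.
  exact: ((continuous_closedP _).1 (@norm_continuous _ _) _ (@closed_eq _ 1)).
have A0 : (A !=set0)%classic.
  pose w1 : 'rV[R]_m := const_mx 1.
  have w10 : w1 != 0.
    apply/eqP => /matrixP /(_ 0 (Ordinal m0)); rewrite !mxE => /eqP.
    by rewrite oner_eq0.
  by exists (`|w1|^-1 *: w1); rewrite /A /= normfZV.
have [wmin Amin Hmin] := EVT_min_rV A0 cA (continuous_subspaceT cQ).
have [wmax Amax Hmax] := EVT_max_rV A0 cA (continuous_subspaceT cQ).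
pose c := Q wmin; pose C := Q wmax.
have c0 : 0 < c.
  have wm0 : wmin != 0.
    apply/eqP => E; move: Amin; rewrite inE /A /= E normr0 => /esym/eqP.
    by rewrite oner_eq0.
  have := Pd_neq0 hB hF wm0; rewrite /c /Q; set d := \det _ => d0.
  by rewrite lt0r mulf_neq0 //= -expr2 sqr_ge0.
have cC : c <= C by apply: Hmax.
have Qhom : forall t w, Q (t *: w) = t ^+ (2 * n) * Q w.
  by move=> t w; rewrite /Q !Pd_hom mulnC exprM; ring.
have Qb : forall w, c * `|w| ^+ (2 * n) <= Q w /\ Q w <= C * `|w| ^+ (2 * n).
  move=> w; have [->|w0] := eqVneq w 0.
    have -> : Q 0 = 0.
      by rewrite -(scale0r (0 : 'rV[R]_m)) Qhom expr0n muln_eq0 (gtn_eqF n0) mul0r.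
    by rewrite normr0 expr0n muln_eq0 (gtn_eqF n0) /= !mulr0 lexx.
  pose u := `|w|^-1 *: w.
  have Au : u \in A by rewrite inE /A /= normfZV.
  have wE : w = `|w| *: u by rewrite /u scalerA divff ?normr_eq0 // scale1r.
  rewrite wE Qhom normrZ normr_id normfZV // mulr1.
  have p0 : 0 <= `|w| ^+ (2 * n) by rewrite exprn_ge0.
  split; [rewrite mulrC | rewrite (mulrC C)]; apply: ler_wpM2l => //; [exact: Hmin | exact: Hmax].
pose K := C / c + 1.
have K1 : 1 <= K by rewrite /K lerDr divr_ge0 // (le_trans (ltW c0)).
exists K; split => // a b hab w.
have QI : Q (w *m b^T) = Q w by rewrite /Q (Pd_act _ hB hab).
have n2 : (0 < 2 * n)%N by rewrite muln_gt0.
have key : forall x y, Q x = Q y -> `|x| <= K * `|y|.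
  move=> x y Qxy.
  have h1 : c * `|x| ^+ (2 * n) <= C * `|y| ^+ (2 * n).
    by apply: le_trans (Qb x).1 _; rewrite Qxy; exact: (Qb y).2.
  have h2 : `|x| ^+ (2 * n) <= K ^+ (2 * n) * `|y| ^+ (2 * n).
    have h3 : `|x| ^+ (2 * n) <= C / c * `|y| ^+ (2 * n).
      by rewrite mulrAC ler_pdivlMr // mulrC.
    apply: le_trans h3 _; apply: ler_wpM2r; first by rewrite exprn_ge0.
    apply: le_trans (ler_eXnr n2 K1); rewrite /K lerDl //.
  rewrite -(ler_pXn2r n2) ?nnegrE ?mulr_ge0 ?(le_trans _ K1) //.
  by rewrite exprMn.
by split; apply: key.
Unshelve. all: by end_near.
Qed.


Definition qq (R : realType) p r (X : 'M[R]_(p, r)) : R :=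
  \sum_i \sum_j X i j ^+ 2.

Lemma qq_ge0 (R : realType) p r (X : 'M[R]_(p, r)) : 0 <= qq X.
Proof. by apply: sumr_ge0 => i _; apply: sumr_ge0 => j _; exact: sqr_ge0. Qed.

Lemma entry_le_norm (R : realType) p r (X : 'M[R]_(p, r)) i j :
  `|X i j| <= `|X|.
Proof.
rewrite (_ : `|X| = mx_norm X) // mx_normrE; apply/bigmax_geP; right => /=.
by exists (i, j).
Qed.

Lemma norm_le_entries (R : realType) p r (X : 'M[R]_(p, r)) (c : R) :
  0 <= c -> (forall i j, `|X i j| <= c) -> `|X| <= c.
Proof.
move=> c0 H; rewrite (_ : `|X| = mx_norm X) // mx_normrE; apply/bigmax_leP; split => //.
Qed.

Lemma norm2_le_qq (R : realType) p r (X : 'M[R]_(p, r)) : `|X| ^+ 2 <= qq X.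
Proof.
have [E|] := eqVneq `|X| 0; first by rewrite E expr0n /= qq_ge0.
move=> /mx_norm_neq0 [[i j] /= E]; rewrite (_ : `|X| = mx_norm X) // E.
rewrite real_normK ?num_real // /qq (bigD1 i) //= (bigD1 j) //=.
rewrite -addrA lerDl addr_ge0 //.
  by apply: sumr_ge0 => k _; exact: sqr_ge0.
by apply: sumr_ge0 => k _; apply: sumr_ge0 => l _; exact: sqr_ge0.
Qed.

Lemma qq_le_norm2 (R : realType) p r (X : 'M[R]_(p, r)) :
  qq X <= (p * r)%:R * `|X| ^+ 2.
Proof.
apply: le_trans (_ : _ <= \sum_(i < p) \sum_(j < r) `|X| ^+ 2) _.
  apply: ler_sum => i _; apply: ler_sum => j _.
  rewrite -real_normK ?num_real //; rewrite lerXn2r ?nnegrE //.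
  exact: entry_le_norm.
by rewrite !sumr_const !card_ord -mulrnA mulr_natl mulnC.
Qed.

Lemma norm_mulmx_le (R : realType) p r s (X : 'M[R]_(p, r)) (A : 'M[R]_(r, s)) K :
  0 <= K -> (forall i j, `|A i j| <= K) -> `|X *m A| <= r%:R * K * `|X|.
Proof.
move=> K0 HA; apply: norm_le_entries; first by rewrite !mulr_ge0.
move=> i j; rewrite mxE; apply: le_trans (ler_norm_sum _ _ _) _.
apply: le_trans (_ : _ <= \sum_(k < r) K * `|X|) _.
  apply: ler_sum => k _.
  by rewrite normrM mulrC ler_pM ?normr_ge0 ?HA ?entry_le_norm.
by rewrite sumr_const card_ord -mulrA mulr_natl.
Qed.

Lemma norm_tr (R : realType) p r (X : 'M[R]_(p, r)) : `|X^T| = `|X|.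
Proof.
apply/eqP; rewrite eq_le; apply/andP; split; apply: norm_le_entries => //.
  by move=> i j; rewrite mxE; exact: entry_le_norm.
by move=> i j; have := entry_le_norm X^T j i; rewrite mxE.
Qed.

Lemma qq_parallelogram (R : realType) p r (X Y : 'M[R]_(p, r)) :
  qq (2^-1 *: (X + Y)) = (qq X + qq Y) / 2 - qq (X - Y) / 4.
Proof.
rewrite /qq -big_split /= !mulr_suml -sumrB; apply: eq_bigr => i _.
rewrite -big_split /= !mulr_suml -sumrB; apply: eq_bigr => j _.
rewrite !mxE; by field.
Qed.

Lemma norm_rho_le (R : realType) m (A Y : 'M[R]_m) K :
  0 <= K -> (forall i j, `|A i j| <= K) ->
  `|A^T *m Y *m A| <= (m%:R * K) ^+ 2 * `|Y|.
Proof.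
move=> K0 HA.
apply: le_trans (norm_mulmx_le _ K0 HA) _.
rewrite -(norm_tr (A^T *m Y)) trmx_mul trmxK.
have := norm_mulmx_le Y^T K0 HA; rewrite norm_tr => h.
rewrite expr2 -[leRHS]mulrA; apply: ler_wpM2l; first by rewrite mulr_ge0.
exact: h.
Qed.

Lemma entries_bound (R : realType) m (b : 'M[R]_m) K :
  (forall w : 'rV[R]_m, `|w *m b^T| <= K * `|w|) -> 0 <= K ->
  forall i j, `|b i j| <= K.
Proof.
move=> H K0 i j.
have e1 : `|(delta_mx 0 j : 'rV[R]_m)| <= 1.
  apply: norm_le_entries => // k l; rewrite mxE.
  by case: (_ && _); rewrite ?normr1 ?normr0.
have := H (delta_mx 0 j); rewrite -rowE => h.
have := entry_le_norm (row j b^T) 0 i; rewrite !mxE => h2.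
apply: le_trans h2 _; apply: le_trans h _.
rewrite -[leRHS]mulr1; exact: ler_wpM2l.
Qed.

Lemma rho_bounds (R : realType) n m (br : 'rV[R]_n -> 'rV[R]_n -> 'rV[R]_m) K :
  1 <= K ->
  (forall a b, graded_aut br a b -> forall w : 'rV[R]_m,
     `|w *m b^T| <= K * `|w| /\ `|w| <= K * `|w *m b^T|) ->
  forall a b, graded_aut br a b -> forall Y : 'M[R]_m,
   `|b^T *m Y *m b| <= (m%:R * K) ^+ 2 * `|Y| /\
   `|Y| <= (m%:R * K) ^+ 2 * `|b^T *m Y *m b|.
Proof.
move=> K1 HK a b hab Y.
have K0 : 0 <= K by apply: le_trans K1.
have bU : b \in unitmx by case: hab => _ [].
have Hb := entries_bound (fun w => (HK a b hab w).1) K0.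
have Hbi : forall i j, `|invmx b i j| <= K.
  apply: entries_bound => // w.
  have := (HK a b hab (w *m (invmx b)^T)).2.
  by rewrite -mulmxA -trmx_mul mulmxV // trmx1 mulmx1.
split; first exact: norm_rho_le.
rewrite {1}(_ : Y = (invmx b)^T *m (b^T *m Y *m b) *m invmx b).
  exact: norm_rho_le.
  rewrite !mulmxA -trmx_mul mulmxV // trmx1 mul1mx -mulmxA mulmxV //.
  by rewrite mulmx1.
Qed.


Definition rho (R : realType) m (b T : 'M[R]_m) := b^T *m T *m b.

Lemma Hgrp1 (R : realType) n m (br : 'rV[R]_n -> 'rV[R]_n -> 'rV[R]_m) :
  Hgrp br 1.
Proof. by exists 1; split; [rewrite det1 | split; [exact: unitmx1 | move=> u v; rewrite !mulmx1]]. Qed.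

Lemma HgrpM (R : realType) n m (br : 'rV[R]_n -> 'rV[R]_n -> 'rV[R]_m) b g :
  Hgrp br b -> Hgrp br g -> Hgrp br (b *m g).
Proof.
move=> [a1 [d1 [u1 h1]]] [a2 [d2 [u2 h2]]]; exists (a1 *m a2); split.
  by rewrite det_mulmx d1 d2 mulr1.
split; first by rewrite unitmx_mul u1 u2.
by move=> u v; rewrite mulmxA h1 h2 !mulmxA.
Qed.

Lemma rhoM (R : realType) m (b g T : 'M[R]_m) :
  rho b (rho g T) = rho (g *m b) T.
Proof. by rewrite /rho trmx_mul !mulmxA. Qed.

Lemma rho_mid (R : realType) m (b X Y : 'M[R]_m) :
  rho b (2^-1 *: (X + Y)) = 2^-1 *: (rho b X + rho b Y).
Proof. by rewrite /rho -scalemxAr -scalemxAl mulmxDr mulmxDl. Qed.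

Lemma rhoB (R : realType) m (b X Y : 'M[R]_m) :
  rho b (X - Y) = rho b X - rho b Y.
Proof. by rewrite /rho mulmxBr mulmxBl. Qed.

Definition Fset (R : realType) n m (br : 'rV[R]_n -> 'rV[R]_n -> 'rV[R]_m)
  (T : 'M[R]_m) : set R := [set x | exists b, Hgrp br b /\ x = qq (rho b T)]%classic.

Definition FF (R : realType) n m (br : 'rV[R]_n -> 'rV[R]_n -> 'rV[R]_m)
  (T : 'M[R]_m) : R := sup (Fset br T).

Definition Bnd (R : realType) n m (br : 'rV[R]_n -> 'rV[R]_n -> 'rV[R]_m) (k : R) :=
  forall b, Hgrp br b -> forall Y : 'M[R]_m,
    `|rho b Y| <= k * `|Y| /\ `|Y| <= k * `|rho b Y|.


Lemma F_has_sup (R : realType) n m (br : 'rV[R]_n -> 'rV[R]_n -> 'rV[R]_m) k T :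
  Bnd br k -> has_sup (Fset br T).
Proof.
move=> hk; split.
  by exists (qq (rho 1 T)), 1; split => //; exact: Hgrp1.
exists ((m * m)%:R * (k * `|T|) ^+ 2) => _ [b [hb ->]].
apply: le_trans (qq_le_norm2 _) _; apply: ler_wpM2l => //.
have h := (hk b hb T).1.
have h0 : 0 <= k * `|T| := le_trans (normr_ge0 _) h.
by rewrite lerXn2r ?nnegrE.
Qed.

Lemma F_ge (R : realType) n m (br : 'rV[R]_n -> 'rV[R]_n -> 'rV[R]_m) k T b :
  Bnd br k -> Hgrp br b -> qq (rho b T) <= FF br T.
Proof.
move=> hk hb; apply: sup_upper_bound; first exact: (F_has_sup _ hk).
by exists b.
Qed.

Lemma F_le (R : realType) n m (br : 'rV[R]_n -> 'rV[R]_n -> 'rV[R]_m) T B :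
  (forall b, Hgrp br b -> qq (rho b T) <= B) -> FF br T <= B.
Proof.
move=> H; apply: ge_sup.
  by exists (qq (rho 1 T)), 1; split => //; exact: Hgrp1.
by move=> _ [b [hb ->]]; exact: H.
Qed.

Lemma F_ge0 (R : realType) n m (br : 'rV[R]_n -> 'rV[R]_n -> 'rV[R]_m) k T :
  Bnd br k -> 0 <= FF br T.
Proof. move=> hk; apply: le_trans (F_ge T hk (Hgrp1 br)); exact: qq_ge0. Qed.

Lemma F_inv (R : realType) n m (br : 'rV[R]_n -> 'rV[R]_n -> 'rV[R]_m) k T g :
  Bnd br k -> Hgrp br g -> FF br (rho g T) <= FF br T.
Proof.
move=> hk hg; apply: F_le => b hb; rewrite rhoM.
by apply: F_ge hk _; exact: HgrpM.
Qed.

Lemma F_conv (R : realType) n m (br : 'rV[R]_n -> 'rV[R]_n -> 'rV[R]_m) k T1 T2 :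
  0 < k -> Bnd br k ->
  FF br (2^-1 *: (T1 + T2)) <=
    (FF br T1 + FF br T2) / 2 - `|T1 - T2| ^+ 2 / (4 * k ^+ 2).
Proof.
move=> k0 hk; apply: F_le => b hb.
rewrite rho_mid qq_parallelogram -rhoB.
have h1 := F_ge T1 hk hb; have h2 := F_ge T2 hk hb.
have h3 : `|T1 - T2| ^+ 2 <= k ^+ 2 * qq (rho b (T1 - T2)).
  apply: le_trans (_ : _ <= k ^+ 2 * `|rho b (T1 - T2)| ^+ 2) _.
    rewrite -exprMn (ler_pXn2r (_ : (0 < 2)%N)) ?nnegrE ?mulr_ge0 ?(ltW k0) //.
    exact: (hk b hb _).2.
  by apply: ler_wpM2l; [rewrite exprn_ge0 ?ltW | exact: norm2_le_qq].
have k20 : 0 < k ^+ 2 by rewrite exprn_gt0.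
have h4 : `|T1 - T2| ^+ 2 / (4 * k ^+ 2) <= qq (rho b (T1 - T2)) / 4.
  rewrite ler_pdivrMr ?mulr_gt0 //; apply: le_trans h3 _.
  by rewrite le_eqVlt; apply/orP; left; apply/eqP; field.
lra.
Qed.

Definition DD (R : realType) n m (br : 'rV[R]_n -> 'rV[R]_n -> 'rV[R]_m)
  (T : 'M[R]_m) : Prop :=
  forall (w : 'rV[R]_m) (e : R), 0 < e ->
    exists b, Hgrp br b /\ qq (w *m b^T) <= (w *m T *m w^T) 0 0 + e.

Lemma D1 (R : realType) n m (br : 'rV[R]_n -> 'rV[R]_n -> 'rV[R]_m) :
  DD br 1.
Proof.
move=> w e e0; exists 1; split; first exact: Hgrp1.
rewrite trmx1 !mulmx1 /qq big_ord1 mxE.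
have -> : \sum_j w 0 j ^+ 2 = \sum_j w 0 j * w^T j 0.
  by apply: eq_bigr => j _; rewrite mxE expr2.
by rewrite lerDl ltW.
Qed.

Lemma quad_mid (R : realType) m (w : 'rV[R]_m) (X Y : 'M[R]_m) :
  (w *m (2^-1 *: (X + Y)) *m w^T) 0 0 =
  ((w *m X *m w^T) 0 0 + (w *m Y *m w^T) 0 0) / 2.
Proof.
by rewrite -scalemxAr -scalemxAl mulmxDr mulmxDl !mxE mulrC.
Qed.

Lemma Dmid (R : realType) n m (br : 'rV[R]_n -> 'rV[R]_n -> 'rV[R]_m) T1 T2 :
  DD br T1 -> DD br T2 -> DD br (2^-1 *: (T1 + T2)).
Proof.
move=> h1 h2 w e e0.
have [b1 [hb1 i1]] := h1 w e e0; have [b2 [hb2 i2]] := h2 w e e0.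
rewrite quad_mid.
have [le12|le21] := leP (qq (w *m b1^T)) (qq (w *m b2^T)).
  by exists b1; split => //; lra.
by exists b2; split => //; lra.
Qed.

Lemma Dinv (R : realType) n m (br : 'rV[R]_n -> 'rV[R]_n -> 'rV[R]_m) T g :
  DD br T -> Hgrp br g -> DD br (rho g T).
Proof.
move=> hT hg w e e0.
have [b [hb i]] := hT (w *m g^T) e e0.
exists (b *m g); split; first exact: HgrpM.
move: i; rewrite /rho trmx_mul !mulmxA trmx_mul trmxK !mulmxA.
by [].
Qed.

Lemma Dpos (R : realType) n m (br : 'rV[R]_n -> 'rV[R]_n -> 'rV[R]_m) K T :
  1 <= K -> (forall b, Hgrp br b -> forall w : 'rV[R]_m, `|w| <= K * `|w *m b^T|) ->
  DD br T -> forall w : 'rV[R]_m, w != 0 -> 0 < (w *m T *m w^T) 0 0.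
Proof.
move=> K1 HK hT w w0.
have K0 : 0 < K by apply: lt_le_trans K1.
pose d := `|w| ^+ 2 / K ^+ 2.
have d0 : 0 < d by rewrite divr_gt0 ?exprn_gt0 ?normr_gt0.
have [b [hb i]] := hT w (d / 2) (divr_gt0 d0 (ltr0Sn _ 1)).
have : d <= qq (w *m b^T).
  apply: le_trans (norm2_le_qq _).
  rewrite ler_pdivrMr ?exprn_gt0 // -exprMn mulrC.
  rewrite (ler_pXn2r (_ : (0 < 2)%N)) ?nnegrE ?mulr_ge0 ?(ltW K0) //.
  exact: HK.
move=> h; lra.
Qed.

Lemma cont_qq_rho (R : realType) m (b : 'M[R]_m) :
  continuous (fun T : 'M[R]_m => qq (rho b T)).
Proof.
have -> : (fun T : 'M[R]_m => qq (rho b T)) = (fun T => \sum_i \sum_j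
   ((b^T *m T *m b) i j * (b^T *m T *m b) i j)).
  apply/funext => T; rewrite /qq /rho; apply: eq_bigr => i _.
  by apply: eq_bigr => j _; rewrite expr2.
apply: cont_sum => i; apply: cont_sum => j.
by apply: cont_mul; exact: cont_mxAB.
Qed.

Lemma cont_quad (R : realType) m (w : 'rV[R]_m) :
  continuous (fun T : 'M[R]_m => (w *m T *m w^T) 0 0).
Proof. exact: cont_mxAB. Qed.

Lemma nat_eps (R : realType) (d : R) : 0 < d -> exists N : nat, N.+1%:R^-1 < d.
Proof.
move=> d0; have [N _ HN] := near_infty_natSinv_lt (PosNum d0).
by exists N; apply: HN => /=.
Qed.

Lemma near_oo_ex (R : realType) (u : nat -> R) (l : R) :
  (u @ \oo --> l)%classic -> forall e, 0 < e -> exists N : nat, forall k, (N <= k)%N -> `|l - u k| < e.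
Proof.
move=> cu e e0; have [N _ HN] := cvgr_dist_lt _ _ cu _ e0.
by exists N => k Nk; apply: HN.
Qed.

Lemma exists_fixed (R : realType) n m (br : 'rV[R]_n -> 'rV[R]_n -> 'rV[R]_m) c :
  0 < c -> Bnd br c ->
  exists T, DD br T /\ forall g, Hgrp br g -> rho g T = T.
Proof.
move=> c0 hc.
pose Dset := [set x | exists T, DD br T /\ x = FF br T]%classic.
have Dne : (Dset !=set0)%classic by exists (FF br 1), 1; split => //; exact: D1.
have hinf : has_inf Dset.
  by split => //; exists 0 => _ [T [_ ->]]; exact: F_ge0 hc.
pose mu := inf Dset.
have mu_le : forall T, DD br T -> mu <= FF br T.
  by move=> T hT; apply: (ge_inf hinf.2); exists T.
have c20 : 0 < 4 * c ^+ 2 by rewrite mulr_gt0 // exprn_gt0.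
have conv : forall T1 T2, DD br T1 -> DD br T2 ->
   `|T1 - T2| ^+ 2 <= 4 * c ^+ 2 * ((FF br T1 + FF br T2) / 2 - mu).
  move=> T1 T2 h1 h2.
  have hA := mu_le _ (Dmid h1 h2); have hB := F_conv T1 T2 c0 hc.
  set d := `|T1 - T2| ^+ 2 in hB *.
  have : d / (4 * c ^+ 2) <= (FF br T1 + FF br T2) / 2 - mu by lra.
  by rewrite ler_pdivrMr // mulrC.
have adh : forall k : nat, exists T, DD br T /\ FF br T < mu + k.+1%:R^-1.
  move=> k; have kp : 0 < k.+1%:R^-1 :> R by rewrite invr_gt0.
  have [_ [T [hT ->]] lt] := inf_adherent kp hinf.
  by exists T.
have [Ts HTs] := choice adh.
have Tbd : forall i j : nat, (i <= j)%N ->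
    `|Ts i - Ts j| ^+ 2 <= 4 * c ^+ 2 * i.+1%:R^-1.
  move=> i j ij; apply: le_trans (conv _ _ (HTs i).1 (HTs j).1) _.
  apply: ler_wpM2l; first exact: ltW.
  have h1 := (HTs i).2; have h2 := (HTs j).2.
  have : j.+1%:R^-1 <= i.+1%:R^-1 :> R by rewrite lef_pV2 ?posrE // ler_nat.
  move=> h3; move: (i.+1%:R^-1) (j.+1%:R^-1) h1 h2 h3 => a b h1 h2 h3; lra.
have cvgTs : cvg (Ts @ \oo)%classic.
  apply/cauchy_cvgP; apply: cauchy_exP => e e0.
  have ed : 0 < e ^+ 2 / (4 * c ^+ 2) by rewrite divr_gt0 // exprn_gt0.
  have [N HN] := nat_eps ed.
  exists (Ts N); exists N => // k /= Nk.
  rewrite mx_norm_ball /ball_ /=.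
  have h := Tbd N k Nk.
  have h2 : `|Ts N - Ts k| ^+ 2 < e ^+ 2.
    apply: le_lt_trans h _; rewrite mulrC -ltr_pdivlMr //.
  by move: h2; rewrite (ltr_pXn2r (_ : (0 < 2)%N)) ?nnegrE ?(ltW e0).
pose Tst := lim (Ts @ \oo)%classic.
have cv : (Ts @ \oo --> Tst)%classic := cvgTs.
have cvg_g : forall g : 'M[R]_m -> R, continuous g ->
   forall e, 0 < e -> exists N : nat, forall k, (N <= k)%N -> `|g Tst - g (Ts k)| < e.
  move=> g cg; apply: (near_oo_ex (u := g \o Ts)).
  exact: (continuous_cvg _ (cg Tst) cv).
have DT : DD br Tst.
  move=> w e e0.
  have e2 : 0 < e / 2 by rewrite divr_gt0.
  have [N HN] := cvg_g _ (@cont_quad _ _ w) _ e2.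
  have [b [hb i]] := (HTs N).1 w _ e2.
  exists b; split => //.
  have := HN N (leqnn N); rewrite ltr_norml => /andP [h1 h2].
  lra.
have Fle : FF br Tst <= mu.
  apply: F_le => b hb; rewrite leNgt; apply/negP => lt.
  have d0 : 0 < (qq (rho b Tst) - mu) / 2 by rewrite divr_gt0 // subr_gt0.
  have [N1 HN1] := cvg_g _ (@cont_qq_rho _ _ b) _ d0.
  have [N2 HN2] := nat_eps d0.
  pose k := maxn N1 N2.
  have := HN1 k (leq_maxl _ _); rewrite ltr_norml => /andP [h5 h6].
  have h2 : qq (rho b (Ts k)) <= FF br (Ts k) := F_ge _ hc hb.
  have h3 := (HTs k).2.
  have h4 : k.+1%:R^-1 <= N2.+1%:R^-1 :> R.
    by rewrite lef_pV2 ?posrE // ler_nat ltnS leq_maxr.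
  move: (k.+1%:R^-1) (N2.+1%:R^-1) h2 h3 h4 HN2 h5 h6 => a a' h2 h3 h4 HN2 h5 h6.
  lra.
have FE : FF br Tst = mu by apply/le_anti; rewrite Fle mu_le.
exists Tst; split => // g hg.
have hT' := Dinv DT hg.
have h1 := F_inv Tst hc hg.
have h2 := mu_le _ hT'.
have h := conv _ _ hT' DT.
have h3 : (FF br (rho g Tst) + FF br Tst) / 2 - mu <= 0 by lra.
have h4 : `|rho g Tst - Tst| ^+ 2 <= 0.
  apply: le_trans h _; rewrite pmulr_rle0 //.
apply/eqP; rewrite -subr_eq0 -normr_eq0 eq_le normr_ge0 andbT.
move: h4; rewrite expr2; have := normr_ge0 (rho g Tst - Tst); nra.
Qed.


Unset Implicit Arguments. Set Strict Implicit.

Theorem theorem2p1 (R : realType) (n m : nat)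
  (br : 'rV[R]_n -> 'rV[R]_n -> 'rV[R]_m) :
  bilinear_antisym br -> nonabelian br -> center_is_z br -> fat br ->
  exists S : 'M[R]_m, pos_def_inner S /\
    (forall (a : 'M[R]_n) (b : 'M[R]_m), graded_aut br a b ->
       forall x y : 'rV[R]_m,
         ((x *m b) *m S *m (y *m b)^T) 0 0 = (x *m S *m y^T) 0 0).
Proof.
move=> hB hN hC hF.
have [K [K1 HK]] := bounded_H hB hN hF.
have [n0 m0] := dims_pos hB hN.
pose c := (m%:R * K) ^+ 2.
have K0 : 0 < K by apply: lt_le_trans K1.
have c0 : 0 < c by rewrite exprn_gt0 // mulr_gt0 // ltr0n.
have hc : Bnd br c.
  by move=> b [a hab] Y; exact: (rho_bounds K1 HK hab Y).
have [T [DT fixT]] := exists_fixed c0 hc.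
have RB : forall b, Hgrp br b -> forall w : 'rV[R]_m, `|w| <= K * `|w *m b^T|.
  by move=> b [a hab] w; exact: (HK a b hab w).2.
have posT := Dpos K1 RB DT.
pose Ts := 2^-1 *: (T + T^T).
have quadT : forall w : 'rV[R]_m, (w *m T^T *m w^T) 0 0 = (w *m T *m w^T) 0 0.
  move=> w; have -> : w *m T^T *m w^T = (w *m T *m w^T)^T.
    by rewrite !trmx_mul trmxK mulmxA.
  by rewrite mxE.
have quadTs : forall w : 'rV[R]_m, (w *m Ts *m w^T) 0 0 = (w *m T *m w^T) 0 0.
  by move=> w; rewrite quad_mid quadT; field.
have TsT : Ts^T = Ts by rewrite /Ts linearZ /= linearD /= trmxK addrC.
have Tsfix : forall b, Hgrp br b -> rho b Ts = Ts.
  move=> b hb; rewrite /Ts rho_mid fixT //.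
  have -> : rho b T^T = (rho b T)^T by rewrite /rho !trmx_mul trmxK mulmxA.
  by rewrite fixT.
have posTs : forall w : 'rV[R]_m, w != 0 -> 0 < (w *m Ts *m w^T) 0 0.
  by move=> w w0; rewrite quadTs; exact: posT.
have TsU : Ts \in unitmx.
  rewrite unitmxE unitfE; apply/negP => /det0P [v v0 Hv].
  by have := posTs v v0; rewrite Hv mul0mx mxE ltxx.
pose S := invmx Ts.
have ST : S^T = S by rewrite /S trmx_inv TsT.
exists S; split.
  split => // x x0.
  pose y := x *m S.
  have xE : x = y *m Ts by rewrite /y -mulmxA mulVmx // mulmx1.
  have y0 : y != 0 by apply: contraNneq x0 => E; rewrite xE E mul0mx.
  have -> : x *m S *m x^T = y *m Ts *m y^T.
    by rewrite /y trmx_mul ST !mulmxA -(mulmxA x S Ts) mulVmx // mulmx1.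
  exact: posTs.
move=> a b hab x y.
have bU : b \in unitmx by case: hab => _ [].
have hf := Tsfix b (ex_intro _ a hab).
have h2 : b^T *m Ts = Ts *m invmx b.
  by rewrite -{2}hf /rho -[RHS]mulmxA mulmxV // mulmx1.
have h3 : b *m S *m b^T *m Ts = 1.
  rewrite -mulmxA h2 mulmxA -(mulmxA b S Ts) /S mulVmx // mulmx1.
  by rewrite mulmxV.
have E : b *m S *m b^T = S.
  by rewrite -[LHS]mulmx1 -(mulmxV TsU) mulmxA h3 mul1mx.
have -> : x *m b *m S *m (y *m b)^T = x *m (b *m S *m b^T) *m y^T.
  by rewrite trmx_mul !mulmxA.
by rewrite E.
Qed.
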